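(* Let $H$ be a connected graph with $n\ge2$ vertices, let $v$ be a vertex of $H$ such that every vertex of $H$ is within distance $d$ of $v$, where $d\ge2$ is an integer, and suppose each vertex of $H$ independently receives a geometrically distributed number of pebbles with parameter $(1+\alpha)^{-1}$, where $\alpha\in\mathbb R_{>0}$. Writing $k:=\lceil n^{1/d}-1\rceil$, the probability that $v$ is unpebblable is at most $$\left(\frac{e\,(2^{d-1}+k-1)}{k\,(1+\Phi(\alpha))}\right)^{k}.$$
   Context: Pebbling: a distribution on a graph assigns a nonnegative integer number of pebbles to each vertex. A pebbling move removes two pebbles from a vertex having at least two pebbles and adds one pebble to an adjacent vertex. A vertex is pebblable if some sequence of pebbling moves from the distribution ends with at least one pebble on it, and unpebblable otherwise. A geometric random variable with parameter $p$ takes value $k\in\{0,1,2,\dots\}$ with probability $p(1-p)^k$. $\Phi:\mathbb R_{\ge0}\to\mathbb R_{\ge0}$ is defined by $\Phi(\alpha):=\alpha^2/(2\alpha+1)$. *)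

(* Defs.v *)
From Stdlib Require Import Reals Lra Lia Classical ClassicalEpsilon.
Open Scope R_scope.

Definition simple_graph (n : nat) (adj : nat -> nat -> Prop) : Prop :=
  (forall u w, adj u w -> (u < n)%nat /\ (w < n)%nat) /\
  (forall u w, adj u w -> adj w u) /\
  (forall u, ~ adj u u).

Inductive walk (adj : nat -> nat -> Prop) : nat -> nat -> nat -> Prop :=
| walk_nil : forall u, walk adj u u 0
| walk_cons : forall u x w l, adj u x -> walk adj x w l -> walk adj u w (S l).

Definition connected (n : nat) (adj : nat -> nat -> Prop) : Prop :=
  forall u w, (u < n)%nat -> (w < n)%nat -> exists l, walk adj u w l.

Definition within_dist (n : nat) (adj : nat -> nat -> Prop) (v d : nat) : Prop :=
  forall u, (u < n)%nat -> exists l, (l <= d)%nat /\ walk adj v u l.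

(* Distributions: functions nat -> nat (number of pebbles on each vertex). *)
Definition upd (c : nat -> nat) (x : nat) (k : nat) : nat -> nat :=
  fun y => if Nat.eqb y x then k else c y.

Definition pebbling_move (adj : nat -> nat -> Prop) (c c' : nat -> nat) : Prop :=
  exists u w, adj u w /\ (2 <= c u)%nat /\
    c' = upd (upd c u (c u - 2)) w (upd c u (c u - 2) w + 1).

Inductive reachable (adj : nat -> nat -> Prop) : (nat -> nat) -> (nat -> nat) -> Prop :=
| reach_refl : forall c, reachable adj c c
| reach_step : forall c c' c'', pebbling_move adj c c' -> reachable adj c' c'' ->
    reachable adj c c''.

Definition pebblable (adj : nat -> nat -> Prop) (c : nat -> nat) (v : nat) : Prop :=
  exists c', reachable adj c c' /\ (1 <= c' v)%nat.

Definition unpebblable adj c v : Prop := ~ pebblable adj c v.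

Definition indic (P : Prop) : R :=
  if excluded_middle_informative P then 1 else 0.

(* Sum of f over all distributions on vertices {0,...,m-1} with at most N
   pebbles on each vertex (and 0 pebbles outside {0,...,m-1}). *)
Fixpoint sum_configs (m N : nat) (f : (nat -> nat) -> R) : R :=
  match m with
  | O => f (fun _ => O)
  | S m' => sum_f_R0 (fun j => sum_configs m' N (fun c => f (upd c m' j))) N
  end.

(* Probability weight of a distribution under i.i.d. geometric(p) on n vertices:
   prod_{u<n} p (1-p)^{c u}. *)
Fixpoint geom_weight (p : R) (n : nat) (c : nat -> nat) : R :=
  match n with
  | O => 1
  | S n' => geom_weight p n' c * (p * (1 - p) ^ (c n'))
  end.

(* Probability of the event E restricted to distributions with at most N
   pebbles per vertex.  These are the partial sums (nondecreasing in N) of the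
   series defining P(E); P(E) is their supremum / limit. *)
Definition prob_trunc (n : nat) (p : R) (E : (nat -> nat) -> Prop) (N : nat) : R :=
  sum_configs n N (fun c => geom_weight p n c * indic (E c)).

Definition Phi (a : R) : R := a ^ 2 / (2 * a + 1).

(* Main.v *)
Require Import Defs.
From Stdlib Require Import Reals Lra Lia Classical ClassicalEpsilon.
Open Scope R_scope.

Lemma upd_eq c x k : upd c x k x = k.
Proof. unfold upd; now rewrite Nat.eqb_refl. Qed.
Lemma upd_neq c x k y : y <> x -> upd c x k y = c y.
Proof. intro H; unfold upd; apply Nat.eqb_neq in H; now rewrite H. Qed.

Lemma reach_trans adj c1 c2 c3 : reachable adj c1 c2 -> reachable adj c2 c3 -> reachable adj c1 c3.
Proof. induction 1; intros; auto. eapply reach_step; eauto. Qed.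

Lemma move_many adj x u : adj x u -> x <> u -> forall t c, (2*t <= c x)%nat ->
  exists c', reachable adj c c' /\ (c u + t <= c' u)%nat /\
    (forall y, y <> x -> y <> u -> c' y = c y).
Proof.
  intros Ha Hne t; induction t as [|t IH]; intros c Hc.
  - exists c; split; [constructor|split; [lia|auto]].
  - set (c1 := upd (upd c x (c x - 2)) u (upd c x (c x - 2) u + 1)).
    assert (E1 : c1 u = (c u + 1)%nat).
    { unfold c1; rewrite upd_eq, upd_neq; auto. }
    assert (E2 : c1 x = (c x - 2)%nat).
    { unfold c1; rewrite upd_neq by auto; now rewrite upd_eq. }
    assert (E3 : forall y, y <> x -> y <> u -> c1 y = c y).
    { intros y H1 H2; unfold c1; rewrite !upd_neq; auto. }
    destruct (IH c1) as [c' [R [Hu Ho]]]; [lia|].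
    exists c'; split; [|split].
    + eapply reach_step; [|exact R]. exists x, u; repeat split; auto; lia.
    + lia.
    + intros y H1 H2; rewrite Ho, E3; auto.
Qed.

Lemma walk_push adj n : simple_graph n adj -> forall u y l, walk adj u y l ->
  forall t c, (t * 2^l <= c y)%nat -> exists c', reachable adj c c' /\ (t <= c' u)%nat.
Proof.
  intros [Hb [Hs Hi]] u y l W; induction W as [u|u x y l Ha W IH]; intros t c Hc.
  - exists c; split; [constructor|]. simpl in Hc; lia.
  - destruct (IH (2*t)%nat c) as [c1 [R1 H1]].
    { rewrite Nat.pow_succ_r' in Hc; lia. }
    assert (Hxu : x <> u) by (intro; subst; eapply Hi; eauto).
    destruct (move_many adj x u (Hs _ _ Ha) Hxu t c1 H1) as [c2 [R2 [H2 _]]].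
    exists c2; split; [eapply reach_trans; eauto|lia].
Qed.

Definition decP (P : Prop) : bool := if excluded_middle_informative P then true else false.
Lemma decP_spec P : decP P = true <-> P.
Proof. unfold decP; destruct excluded_middle_informative; split; auto; discriminate. Qed.
Lemma decP_t (P:Prop) : P -> decP P = true. Proof. apply decP_spec. Qed.
Lemma decP_f (P:Prop) : ~P -> decP P = false.
Proof. unfold decP; destruct excluded_middle_informative; tauto. Qed.

Fixpoint nbsum (adj : nat -> nat -> Prop) w (c : nat -> nat) m : nat :=
  match m with O => O | S m' => (nbsum adj w c m' + if decP (adj w m') then Nat.div2 (c m') else 0)%nat end.

Lemma gather adj n w : simple_graph n adj -> forall m c,
  exists c', reachable adj c c' /\ (c w + nbsum adj w c m <= c' w)%nat /\
    (forall y, (m <= y)%nat -> y <> w -> c' y = c y).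
Proof.
  intros [Hb [Hs Hi]] m; induction m as [|m IH]; intros c.
  - exists c; split; [constructor|]; split; [simpl; lia|auto].
  - destruct (IH c) as [c1 [R1 [H1 O1]]]. simpl.
    destruct (decP (adj w m)) eqn:E.
    + apply (proj1 (decP_spec _)) in E.
      assert (Hmw : m <> w) by (intro Hq; rewrite Hq in E; exact (Hi _ E)).
      assert (Hc1m : c1 m = c m) by (apply O1; auto).
      destruct (move_many adj m w (Hs _ _ E) Hmw (Nat.div2 (c m)) c1) as [c2 [R2 [H2 O2]]].
      { rewrite Hc1m; pose proof (Nat.div2_odd (c m)); lia. }
      exists c2; split; [eapply reach_trans; eauto|split].
      * lia.
      * intros y Hy Hyw; rewrite O2 by lia; apply O1; lia.
    + exists c1; split; auto; split; [lia|]. intros; apply O1; lia.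
Qed.

Fixpoint nsum (f : nat -> nat) m : nat :=
  match m with O => O | S m' => (nsum f m' + f m')%nat end.
Definition ind (P : Prop) : nat := if decP P then 1%nat else 0%nat.
Lemma ind_1 (P:Prop) : P -> ind P = 1%nat. Proof. intro; unfold ind; now rewrite decP_t. Qed.
Lemma ind_0 (P:Prop) : ~P -> ind P = 0%nat. Proof. intro; unfold ind; now rewrite decP_f. Qed.

Lemma nsum_le f g m : (forall y, (y < m)%nat -> (f y <= g y)%nat) -> (nsum f m <= nsum g m)%nat.
Proof. induction m; simpl; intros; auto. specialize (IHm (fun y Hy => H y ltac:(lia))). specialize (H m ltac:(lia)). lia. Qed.
Lemma nsum_add f g m : nsum (fun y => f y + g y)%nat m = (nsum f m + nsum g m)%nat.
Proof. induction m; simpl; lia. Qed.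
Lemma nsum_mulc a f m : nsum (fun y => a * f y)%nat m = (a * nsum f m)%nat.
Proof. induction m; simpl; lia. Qed.
Lemma nsum_swap (g : nat -> nat -> nat) m n :
  nsum (fun y => nsum (fun x => g x y) m) n = nsum (fun x => nsum (fun y => g x y) n) m.
Proof. induction n; simpl. - induction m; simpl; lia. - rewrite IHn, <- nsum_add. reflexivity. Qed.
Lemma nsum_ge_term f m x : (x < m)%nat -> (f x <= nsum f m)%nat.
Proof. induction m; simpl; intros; [lia|]. destruct (Nat.eq_dec x m); [subst; lia|]. specialize (IHm ltac:(lia)); lia. Qed.
Lemma nsum_one m : nsum (fun _ => 1%nat) m = m.
Proof. induction m; simpl; lia. Qed.

Definition ball (adj : nat -> nat -> Prop) (v j y : nat) : Prop := exists l, (l <= j)%nat /\ walk adj v y l.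
Definition deg (adj : nat -> nat -> Prop) n (x : nat) := nsum (fun y => ind (adj x y)) n.

Lemma walk_last adj l : forall u y, walk adj u y (S l) -> exists x, walk adj u x l /\ adj x y.
Proof.
  induction l; intros u y W; inversion W; subst.
  - inversion H3; subst. exists u; split; [constructor|auto].
  - destruct (IHl _ _ H3) as [z [W1 A1]]. exists z; split; auto. eapply walk_cons; eauto.
Qed.

Lemma ball0 adj v m : (nsum (fun y => ind (ball adj v 0 y)) m <= 1)%nat /\
   ((m <= v)%nat -> nsum (fun y => ind (ball adj v 0 y)) m = 0%nat).
Proof.
  assert (B : forall y, ball adj v 0 y -> y = v).
  { intros y [l [Hl W]]. assert (l = 0%nat) by lia; subst. inversion W; auto. }
  induction m; simpl; [lia|]. destruct IHm as [I1 I2].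
  destruct (classic (ball adj v 0 m)) as [Hb|Hb].
  - apply B in Hb as E; subst. rewrite I2 by lia. split; [|lia].
    unfold ind; destruct decP; lia.
  - rewrite ind_0 by auto. split; [lia|]. intros; rewrite I2; lia.
Qed.

Lemma exists_hub n adj v d k : simple_graph n adj -> within_dist n adj v d -> (1 <= d)%nat ->
  (1 <= k)%nat -> (k ^ d < n)%nat -> exists w, ball adj v (d-1) w /\ (k <= deg adj n w)%nat.
Proof.
  intros SG WD Hd Hk Hn. destruct SG as [Hb [Hs Hi]].
  apply NNPP; intro Hno.
  assert (Hdeg : forall x, ball adj v (d-1) x -> (deg adj n x < k)%nat).
  { intros x Hx. apply Nat.nle_gt. intro; apply Hno; eauto. }
  assert (C : forall j, (j <= d)%nat -> (nsum (fun y => ind (ball adj v j y)) n <= k ^ j)%nat).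
  { induction j; intros Hj.
    - simpl. apply ball0.
    - specialize (IHj ltac:(lia)).
      set (b := fun x => ind (ball adj v j x)).
      assert (P : forall y, (y < n)%nat -> (ind (ball adj v (S j) y) <=
          b y + nsum (fun x => b x * ind (adj x y)) n)%nat).
      { intros y Hy. destruct (classic (ball adj v (S j) y)) as [[l [Hl W]]|Hnb].
        - rewrite ind_1 by (exists l; auto).
          destruct (Nat.eq_dec l (S j)) as [->|Hne].
          + destruct (walk_last _ _ _ _ W) as [x [Wx Ax]].
            assert (H : (x < n)%nat) by (exact (proj1 (Hb _ _ Ax))).
            assert (G : (b x * ind (adj x y) <= nsum (fun x => b x * ind (adj x y)) n)%nat)
              by (apply (nsum_ge_term (fun x => b x * ind (adj x y))%nat); auto).
            assert (bx : b x = 1%nat) by (unfold b; apply ind_1; exists j; auto).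
            rewrite bx, (ind_1 (adj x y)) in G by auto. lia.
          + unfold b; rewrite ind_1 by (exists l; split; auto; lia). lia.
        - rewrite ind_0 by auto. lia. }
      apply nsum_le in P. rewrite nsum_add, nsum_swap in P.
      assert (Q : (nsum (fun x => nsum (fun y => b x * ind (adj x y)) n) n <=
                   nsum (fun x => (k-1) * b x) n)%nat).
      { apply nsum_le; intros x Hx. rewrite nsum_mulc. unfold b.
        destruct (classic (ball adj v j x)) as [Hbx|Hbx].
        - rewrite ind_1 by auto. assert (ball adj v (d-1) x).
          { destruct Hbx as [l [Hl W]]; exists l; split; auto; lia. }
          apply Hdeg in H. unfold deg in H. lia.
        - rewrite ind_0 by auto. lia. }
      rewrite nsum_mulc in Q. fold b in IHj. simpl.
      assert (nsum b n <= k^j)%nat by exact IHj. nia. }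
  specialize (C d (le_n _)).
  assert (nsum (fun _ => 1%nat) n <= nsum (fun y => ind (ball adj v d y)) n)%nat.
  { apply nsum_le; intros y Hy. destruct (WD y Hy) as [l [Hl W]].
    rewrite ind_1 by (exists l; auto). lia. }
  rewrite nsum_one in H. lia.
Qed.

Fixpoint prodF m (F : nat -> nat -> R) (c : nat -> nat) : R :=
  match m with O => 1 | S m' => prodF m' F c * F m' (c m') end.
Fixpoint prodR m (f : nat -> R) : R :=
  match m with O => 1 | S m' => prodR m' f * f m' end.

Lemma sum_configs_ext m N : forall f g, (forall c, f c = g c) -> sum_configs m N f = sum_configs m N g.
Proof. induction m; intros f g H; simpl; auto. apply sum_eq; intros; apply IHm; auto. Qed.
Lemma sum_configs_le m N : forall f g, (forall c, f c <= g c) -> sum_configs m N f <= sum_configs m N g.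
Proof. induction m; intros f g H; simpl; auto. apply sum_Rle; intros; apply IHm; auto. Qed.
Lemma sum_configs_scal m N : forall f a, sum_configs m N (fun c => f c * a) = sum_configs m N f * a.
Proof.
  induction m; intros f a; simpl; auto.
  rewrite Rmult_comm, scal_sum. apply sum_eq; intros. apply IHm.
Qed.
Lemma prodF_ext m F c c' : (forall u, (u < m)%nat -> c u = c' u) -> prodF m F c = prodF m F c'.
Proof. induction m; simpl; intros; auto. rewrite IHm by (intros; apply H; lia). rewrite H by lia; auto. Qed.
Lemma sum_configs_prod m N F : sum_configs m N (prodF m F) = prodR m (fun u => sum_f_R0 (F u) N).
Proof.
  induction m; simpl; auto.
  rewrite scal_sum, <- IHm.
  apply sum_eq; intros j _. rewrite (Rmult_comm (F m j)), <- sum_configs_scal.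
  apply sum_configs_ext; intros c.
  rewrite (prodF_ext m F (upd c m j) c) by (intros; apply upd_neq; lia).
  rewrite upd_eq; auto.
Qed.
Lemma geom_prod p m c : geom_weight p m c = prodF m (fun _ j => p * (1-p)^j) c.
Proof. induction m; simpl; auto. rewrite IHm; auto. Qed.
Lemma prodF_mul m F G c : prodF m F c * prodF m G c = prodF m (fun u j => F u j * G u j) c.
Proof. induction m; simpl; [ring|]. rewrite <- IHm; ring. Qed.
Lemma pow_nbsum (adj : nat -> nat -> Prop) w z c m : z ^ (nbsum adj w c m) =
   prodF m (fun u j => (if decP (adj w u) then z else 1) ^ (Nat.div2 j)) c.
Proof.
  induction m; simpl; auto. rewrite pow_add, IHm. destruct (decP (adj w m)); auto.
  simpl; rewrite pow1; auto.
Qed.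
Lemma prodR_bound (adj : nat -> nat -> Prop) w A m f : 0 <= A ->
  (forall u, (u < m)%nat -> 0 <= f u /\ f u <= (if decP (adj w u) then A else 1)) ->
  0 <= prodR m f /\ prodR m f <= A ^ (nsum (fun y => ind (adj w y)) m).
Proof.
  intros HA; induction m; simpl; intros H; [lra|].
  destruct IHm as [I1 I2]; [intros; apply H; lia|].
  destruct (H m (le_n _)) as [F1 F2]. split; [nra|].
  rewrite pow_add. unfold ind. destruct (decP (adj w m)); simpl.
  - rewrite Rmult_1_r. apply Rmult_le_compat; auto.
  - rewrite Rmult_1_r. rewrite <- (Rmult_1_r (A ^ _)). apply Rmult_le_compat; auto.
Qed.

Lemma sum_mono h N : (forall j, 0 <= h j) -> forall K, sum_f_R0 h N <= sum_f_R0 h (N + K).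
Proof.
  intros Hh K; induction K. - rewrite Nat.add_0_r; lra.
  - replace (N + S K)%nat with (S (N + K)) by lia. simpl. specialize (Hh (S (N+K))). lra.
Qed.

Lemma geom_sum r z N : 0 < r < 1 -> 0 <= z <= 1 ->
  sum_f_R0 (fun j => (1 - r) * r ^ j * z ^ (Nat.div2 j)) N <= (1 - r^2) / (1 - r^2 * z).
Proof.
  intros Hr Hz. set (h := fun j => (1 - r) * r ^ j * z ^ (Nat.div2 j)).
  set (w := r^2 * z). set (A := (1 - r^2) / (1 - w)).
  assert (Hw : 0 <= w < 1) by (unfold w; split; nra).
  assert (HA : A * (1 - w) = 1 - r^2) by (unfold A; field; lra).
  assert (T : forall i, sum_f_R0 h (2*i+1) = A - A * w ^ (S i)).
  { induction i.
    - simpl. unfold h. simpl. replace (A - A * (w * 1)) with (A * (1 - w)) by ring. rewrite HA. ring.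
    - replace (2 * S i + 1)%nat with (S (S (2*i+1))) by lia.
      change (sum_f_R0 h (S (S (2*i+1)))) with (sum_f_R0 h (2*i+1) + h (S (2*i+1)) + h (S (S (2*i+1)))).
      rewrite IHi.
      assert (E1 : h (S (2*i+1)) = (1-r) * w ^ S i).
      { unfold h, w. replace (S (2*i+1)) with (2 * (S i))%nat by lia.
        rewrite Nat.div2_double, pow_mult, Rpow_mult_distr. ring. }
      assert (E2 : h (S (S (2*i+1))) = (1-r) * r * w ^ S i).
      { unfold h, w. replace (S (S (2*i+1))) with (S (2 * (S i)))%nat by lia.
        rewrite Nat.div2_succ_double, Rpow_mult_distr. rewrite <- tech_pow_Rmult, pow_mult. ring. }
      rewrite E1, E2.
      replace (A - A * w ^ S i + (1 - r) * w ^ S i + (1 - r) * r * w ^ S i)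
        with (A - A * w ^ S i + (1 - r^2) * w ^ S i) by ring.
      rewrite <- HA. simpl. ring.
  }
  assert (Hh : forall j, 0 <= h j).
  { intro j; unfold h. apply Rmult_le_pos; [apply Rmult_le_pos; [lra|apply pow_le; lra]|apply pow_le; lra]. }
  apply Rle_trans with (sum_f_R0 h (2*N+1)).
  - replace (2*N+1)%nat with (N + (N+1))%nat by lia. apply sum_mono; auto.
  - rewrite T. assert (0 <= A) by (unfold A; apply Rmult_le_pos; [nra|left; apply Rinv_0_lt_compat; lra]).
    assert (0 <= w ^ S N) by (apply pow_le; lra). nra.
Qed.

Lemma pow_lt_strict a b : 0 <= a < b -> forall n, a ^ S n < b ^ S n.
Proof.
  intros H n. simpl. assert (a ^ n <= b ^ n) by (apply pow_incr; lra).
  assert (0 < b ^ n) by (apply pow_lt; lra). assert (0 <= a ^ n) by (apply pow_le; lra). nra.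
Qed.

Lemma pow_anti z a b : 0 < z <= 1 -> (a <= b)%nat -> z ^ b <= z ^ a.
Proof.
  intros Hz Hab. replace b with (a + (b - a))%nat by lia. rewrite pow_add.
  assert (0 <= z ^ a) by (apply pow_le; lra).
  assert (z ^ (b - a) <= 1) by (rewrite <- (pow1 (b-a)); apply pow_incr; lra).
  assert (0 <= z ^ (b - a)) by (apply pow_le; lra). nra.
Qed.

Lemma exp_pow_nat x m : exp x ^ m = exp (INR m * x).
Proof.
  induction m. - simpl; rewrite Rmult_0_l, exp_0; auto.
  - rewrite S_INR, <- tech_pow_Rmult, IHm. replace ((INR m + 1) * x) with (x + INR m * x) by ring.
    rewrite exp_plus; auto.
Qed.

Lemma final_ineq q A z (m k : nat) : (1 <= m)%nat -> (1 <= k)%nat -> 0 < q <= 1 ->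
  z = INR m / (INR m + INR k) -> 0 <= A <= q / (1 - z) ->
  A ^ k * / z ^ m <= (exp 1 * (q * (INR m + INR k) / INR k)) ^ k.
Proof.
  intros Hm Hk Hq Hz HA.
  assert (Hm' : 1 <= INR m) by (apply (le_INR 1); auto).
  assert (Hk' : 1 <= INR k) by (apply (le_INR 1); auto).
  assert (Hz0 : 0 < z) by (subst; apply Rdiv_lt_0_compat; lra).
  assert (E1 : q / (1 - z) = q * (INR m + INR k) / INR k) by (subst; field; lra).
  assert (E2 : / z = 1 + INR k / INR m) by (subst; field; lra).
  rewrite Rpow_mult_distr, Rmult_comm.
  apply Rmult_le_compat.
  - rewrite <- pow_inv. apply pow_le. left; apply Rinv_0_lt_compat; auto.
  - apply pow_le; lra.
  - rewrite <- pow_inv, E2. apply Rle_trans with (exp (INR k / INR m) ^ m).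
    + apply pow_incr. split; [|apply exp_ineq1_le]. assert (0 <= INR k / INR m) by (apply Rmult_le_pos; [lra|left; apply Rinv_0_lt_compat; lra]). lra.
    + rewrite !exp_pow_nat. right; f_equal; field; lra.
  - apply pow_incr; rewrite <- E1; lra.
Qed.

Theorem lemma24 (n : nat) (adj : nat -> nat -> Prop) (v d : nat) (alpha : R) (k : nat) :
  (2 <= n)%nat ->
  simple_graph n adj ->
  connected n adj ->
  (v < n)%nat ->
  (2 <= d)%nat ->
  within_dist n adj v d ->
  0 < alpha ->
  (* k = ceil(n^(1/d) - 1) *)
  INR k - 1 < Rpower (INR n) (/ INR d) - 1 <= INR k ->
  forall N : nat,
    prob_trunc n (/ (1 + alpha)) (fun c => unpebblable adj c v) N
    <= (exp 1 * (2 ^ (d - 1) + INR k - 1) / (INR k * (1 + Phi alpha))) ^ k.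
Proof.
  intros Hn SG _ Hv Hd WD Ha [Hk1 Hk2] N.
  set (X := Rpower (INR n) (/ INR d)). fold X in Hk1, Hk2.
  assert (HX0 : 0 < X) by (unfold X, Rpower; apply exp_pos).
  assert (Hd' : 2 <= INR d) by (apply (le_INR 2); auto).
  assert (Hn' : 2 <= INR n) by (apply (le_INR 2); auto).
  assert (HXd : X ^ d = INR n).
  { rewrite <- Rpower_pow by auto. unfold X. rewrite Rpower_mult.
    replace (/ INR d * INR d) with 1 by (field; lra). apply Rpower_1; lra. }
  assert (Hk : (1 <= k)%nat).
  { destruct k; [|lia]. exfalso. change (INR 0) with 0 in Hk2.
    assert (X ^ d <= 1 ^ d) by (apply pow_incr; lra). rewrite pow1 in H. lra. }
  assert (Hkd : (k ^ d < n)%nat).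
  { apply INR_lt. rewrite pow_INR. rewrite <- HXd.
    destruct d as [|d']; [lia|]. apply pow_lt_strict. split; [apply pos_INR|lra]. }
  destruct (exists_hub n adj v d k SG WD ltac:(lia) Hk Hkd) as [w [Hw Hdeg]].
  set (M := (2 ^ (d - 1))%nat).
  assert (Key : forall c, unpebblable adj c v -> (nbsum adj w c n < M)%nat).
  { intros c Hu. apply Nat.nle_gt. intro HM. apply Hu.
    destruct (gather adj n w SG n c) as [c1 [R1 [H1 _]]].
    destruct Hw as [l [Hl W]].
    destruct (walk_push adj n SG v w l W 1 c1) as [c2 [R2 H2]].
    { assert (2 ^ l <= M)%nat by (apply Nat.pow_le_mono_r; lia). lia. }
    exists c2; split; auto. eapply reach_trans; eauto. }
  set (p := / (1 + alpha)). set (r := 1 - p).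
  assert (Hp : 0 < p < 1).
  { unfold p; split; [apply Rinv_0_lt_compat; lra|]. rewrite <- Rinv_1. apply Rinv_lt_contravar; lra. }
  assert (Hr : 0 < r < 1) by (unfold r; lra).
  set (m := (M - 1)%nat).
  assert (HM2 : (2 <= M)%nat).
  { unfold M. replace 2%nat with (2^1)%nat at 1 by auto. apply Nat.pow_le_mono_r; lia. }
  assert (HMR : INR M = 2 ^ (d - 1)) by (unfold M; rewrite pow_INR; auto).
  assert (HmR : INR m = 2 ^ (d - 1) - 1) by (unfold m; rewrite minus_INR by lia; rewrite HMR; simpl; lra).
  assert (Hm1 : (1 <= m)%nat) by (unfold m; lia).
  assert (Hm' : 1 <= INR m) by (apply (le_INR 1); auto).
  assert (Hk' : 1 <= INR k) by (apply (le_INR 1); auto).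
  set (z := INR m / (INR m + INR k)).
  assert (Hz : 0 < z < 1).
  { unfold z; split; [apply Rdiv_lt_0_compat; lra|]. apply Rmult_lt_reg_r with (INR m + INR k); [lra|].
    unfold Rdiv; rewrite Rmult_assoc, Rinv_l by lra. lra. }
  set (zu := fun u => if decP (adj w u) then z else 1).
  set (H := fun u j => p * (1 - p) ^ j * zu u ^ Nat.div2 j).
  assert (S1 : prob_trunc n p (fun c => unpebblable adj c v) N <=
               sum_configs n N (fun c => prodF n H c * / z ^ m)).
  { unfold prob_trunc. apply sum_configs_le. intro c.
    unfold H. rewrite <- prodF_mul, <- geom_prod.
    replace (prodF n (fun u j => zu u ^ Nat.div2 j) c) with (z ^ nbsum adj w c n)
      by (unfold zu; apply pow_nbsum).
    assert (G0 : 0 <= geom_weight p n c).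
    { rewrite geom_prod. clear -Hp. induction n; simpl; [lra|].
      apply Rmult_le_pos; auto. apply Rmult_le_pos; [lra|apply pow_le; lra]. }
    assert (Zm : 0 < z ^ m) by (apply pow_lt; lra).
    assert (Zb : 0 <= z ^ nbsum adj w c n) by (apply pow_le; lra).
    unfold indic. destruct excluded_middle_informative as [Hu|Hu].
    - apply Key in Hu. assert (z ^ m <= z ^ nbsum adj w c n) by (apply pow_anti; [lra|unfold m; lia]).
      rewrite Rmult_1_r, Rmult_assoc. rewrite <- (Rmult_1_r (geom_weight p n c)) at 1.
      apply Rmult_le_compat_l; auto.
      apply Rmult_le_reg_r with (z ^ m); auto. rewrite Rmult_assoc, Rinv_l by lra. lra.
    - rewrite Rmult_0_r. apply Rmult_le_pos; [apply Rmult_le_pos; auto|left; apply Rinv_0_lt_compat; auto]. }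
  rewrite sum_configs_scal, sum_configs_prod in S1.
  set (A := (1 - r^2) / (1 - r^2 * z)).
  assert (HA0 : 0 <= A) by (unfold A; apply Rmult_le_pos; [nra|left; apply Rinv_0_lt_compat; nra]).
  assert (HA1 : A <= 1).
  { unfold A. apply Rmult_le_reg_r with (1 - r^2 * z); [nra|].
    unfold Rdiv; rewrite Rmult_assoc, Rinv_l by nra. nra. }
  destruct (prodR_bound adj w A n (fun u => sum_f_R0 (H u) N) HA0) as [P1 P2].
  { intros u _. assert (E : forall j, H u j = (1 - r) * r ^ j * zu u ^ Nat.div2 j)
      by (intro; unfold H, r; f_equal; f_equal; ring).
    rewrite (sum_eq _ _ _ (fun j _ => E j)). split.
    - apply cond_pos_sum; intro j. apply Rmult_le_pos; [apply Rmult_le_pos; [lra|apply pow_le; lra]|].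
      apply pow_le; unfold zu; destruct decP; lra.
    - unfold zu; destruct decP.
      + apply geom_sum; lra.
      + eapply Rle_trans; [apply geom_sum; lra|]. right; field; nra. }
  assert (P3 : A ^ (nsum (fun y => ind (adj w y)) n) <= A ^ k).
  { unfold deg in Hdeg. set (D := nsum (fun y => ind (adj w y)) n) in *.
    replace D with (k + (D - k))%nat by lia.
    rewrite pow_add. assert (0 <= A ^ k) by (apply pow_le; lra).
    assert (A ^ (D - k) <= 1) by (rewrite <- (pow1 (D - k)); apply pow_incr; lra).
    assert (0 <= A ^ (D - k)) by (apply pow_le; lra). nra. }
  assert (Hq : 0 < 1 - r^2 <= 1) by nra.
  assert (HAq : A <= (1 - r^2) / (1 - z)).
  { unfold A, Rdiv. apply Rmult_le_compat_l; [lra|]. apply Rinv_le_contravar; [lra|]. nra. }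
  pose proof (final_ineq (1 - r^2) A z m k Hm1 Hk Hq eq_refl (conj HA0 HAq)) as F.
  assert (Ez : 0 < / z ^ m) by (apply Rinv_0_lt_compat, pow_lt; lra).
  replace (exp 1 * (2 ^ (d - 1) + INR k - 1) / (INR k * (1 + Phi alpha)))
    with (exp 1 * ((1 - r ^ 2) * (INR m + INR k) / INR k)).
  - eapply Rle_trans; [exact S1|]. eapply Rle_trans; [|exact F].
    apply Rmult_le_compat_r; [lra|]. lra.
  - rewrite HmR. unfold r, p, Phi. field. assert (0 <= alpha ^ 2) by (apply pow_le; lra).
    repeat split; lra.
Qed.
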